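(* Let $N,M,m\in\mathbb{N}$ with $M\geq 3$, and let $T:\mathbb{C}^N\times\cdots\times\mathbb{C}^N\to\mathbb{C}$ be an $m$-linear form, where each copy of $\mathbb{C}^N$ carries the sup norm. Let $\|T\|=\sup\{|T(x^{(1)},\ldots,x^{(m)})|:\|x^{(i)}\|_\infty\leq 1,\ 1\le i\le m\}$ and $\|T\|_M=\sup\{|T(x^{(1)},\ldots,x^{(m)})|: x^{(1)},\ldots,x^{(m)}\in D_M^N\}$. Then $$\|T\|_M\leq \|T\|\leq r_M^{-m}\|T\|_M.$$
   Context: $T_M=\{\exp(2j\pi i/M): j=0,\ldots,M-1\}$ is the set of $M$th roots of unity, $D_M=\operatorname{conv}(T_M)\subset\mathbb{C}$, $D_M^N=D_M\times\cdots\times D_M$ ($N$ factors), and $r_M=\left(\frac12+\frac12\cos\left(\frac{2\pi}{M}\right)\right)^{1/2}$. *)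

(* Defs.v *)
From HB Require Import structures.
From mathcomp Require Import all_boot all_order all_algebra.
From mathcomp Require Import complex.
From mathcomp Require Import all_classical all_reals.
From mathcomp Require Import trigo.
Set Implicit Arguments. Unset Strict Implicit. Unset Printing Implicit Defensive.
Import Order.TTheory GRing.Theory Num.Theory.
Local Open Scope ring_scope.
Local Open Scope classical_set_scope.

Section Defs.
Variable R : realType.
Local Notation C := R[i].
Local Notation normc := (@ComplexField.Normc.normc R).

Definition supnorm (N : nat) (x : 'I_N -> C) : R := \big[Num.max/0]_(k < N) normc (x k).

Definition upd (N m : nat) (x : 'I_m -> 'I_N -> C) (i : 'I_m) (y : 'I_N -> C) :
  'I_m -> 'I_N -> C := fun j => if j == i then y else x j.

Definition multilinear (N m : nat) (T : ('I_m -> 'I_N -> C) -> C) : Prop :=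
  forall (x : 'I_m -> 'I_N -> C) (i : 'I_m) (a : C) (y z : 'I_N -> C),
    T (upd x i (fun k => a * y k + z k)) = a * T (upd x i y) + T (upd x i z).

Definition root_unity (M j : nat) : C :=
  Complex (cos (2 * pi * j%:R / M%:R)) (sin (2 * pi * j%:R / M%:R)).

Definition T_M (M : nat) : set C := [set root_unity M j | j in [set j : nat | (j < M)%N]].

(* D_M = convex hull of T_M: convex combinations of the M roots of unity *)
Definition D_M (M : nat) : set C :=
  [set z | exists lam : 'I_M -> R, (forall j, 0 <= lam j) /\ \sum_(j < M) lam j = 1 /\
     z = \sum_(j < M) (Complex (lam j) 0) * root_unity M j].

Definition r_M (M : nat) : R := Num.sqrt (2^-1 + 2^-1 * cos (2 * pi / M%:R)).

Definition opnorm (N m : nat) (T : ('I_m -> 'I_N -> C) -> C) : R :=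
  sup [set normc (T x) | x in [set x : 'I_m -> 'I_N -> C | forall i, supnorm (x i) <= 1]].

Definition opnorm_M (M N m : nat) (T : ('I_m -> 'I_N -> C) -> C) : R :=
  sup [set normc (T x) | x in [set x : 'I_m -> 'I_N -> C | forall i k, D_M M (x i k)]].

End Defs.

(* Main.v *)
Require Import Defs.
From HB Require Import structures.
From mathcomp Require Import all_boot all_order all_algebra.
From mathcomp Require Import complex.
From mathcomp Require Import all_classical all_reals.
From mathcomp Require Import trigo.
From mathcomp Require Import ring lra.
Import Order.TTheory GRing.Theory Num.Theory.
Local Open Scope ring_scope.
Local Open Scope complex_scope.
Section G.
Variable R : realType.
Local Notation C := R[i].
Lemma mulC (a b c d : R) : Complex a b * Complex c d = Complex (a*c - b*d) (a*d + b*c).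
Proof. by []. Qed.
Lemma addC (a b c d : R) : Complex a b + Complex c d = Complex (a+c) (b+d).
Proof. by []. Qed.

Variable M : nat.
Hypothesis hM : (3 <= M)%N.
Let be := pi / (M%:R : R).
Lemma Mgt0 : (0 : R) < M%:R.
Proof. rewrite ltr0n; by apply: leq_trans hM. Qed.
Lemma be_gt0 : 0 < be.
Proof. by rewrite /be divr_gt0 // ?pi_gt0 // Mgt0. Qed.
Lemma be_le : 3%:R * be <= pi.
Proof.
have hM' : (3%:R:R) <= M%:R by rewrite ler_nat.
rewrite /be mulrA ler_pdivrMr ?Mgt0 // mulrC; apply: ler_wpM2l => //.
exact: ltW (pi_gt0 R).
Qed.

Lemma ru_angle j : root_unity R M j = Complex (cos (j%:R * (2 * be))) (sin (j%:R * (2 * be))).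
Proof.
by rewrite /root_unity /be; have -> : (2 * pi * j%:R / M%:R = j%:R * (2 * (pi / M%:R)) :> R) by ring.
Qed.

Lemma ru_S k : root_unity R M k.+1 = root_unity R M k * root_unity R M 1.
Proof.
rewrite !ru_angle mulC mul1r.
have -> : k.+1%:R * (2 * be) = k%:R * (2*be) + 2 * be by rewrite -natr1 mulrDl mul1r.
by rewrite cosD sinD; congr Complex; ring.
Qed.

Lemma ru_X k : root_unity R M k = root_unity R M 1 ^+ k.
Proof.
elim: k => [|k IH]. by rewrite ru_angle mul0r cos0 sin0.
by rewrite ru_S IH exprS mulrC.
Qed.

Lemma ru_M : root_unity R M 1 ^+ M = 1.
Proof.
rewrite -ru_X ru_angle.
have -> : M%:R * (2 * be) = pi *+ 2.
  rewrite /be -mulr_natr; field; exact: lt0r_neq0 Mgt0.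
by rewrite cos2pi sin2pi.
Qed.

Lemma ru_sum : \sum_(k < M) root_unity R M k = 0.
Proof.
have h := subrX1 (root_unity R M 1) M.
rewrite ru_M subrr in h.
have hne : root_unity R M 1 - 1 != 0.
  rewrite ru_angle mul1r subr_eq0; apply/negP => /eqP [_].
  apply/eqP; rewrite gt_eqF // sin_gt0_pi //; apply/andP; split.
    by rewrite mulr_gt0 // be_gt0.
  have := be_le; have := be_gt0; lra.
apply/eqP; move: h => /esym /eqP; rewrite mulf_eq0 (negbTE hne) /=.
by under eq_bigr do rewrite -ru_X.
Qed.

Lemma polar (a b : R) : exists rho th, 0 <= rho /\ rho = Num.sqrt (a^+2 + b^+2) /\
  0 <= th <= pi *+ 2 /\ a = rho * cos th /\ b = rho * sin th.
Proof.
set rho := Num.sqrt (a^+2 + b^+2).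
have rho0 : 0 <= rho by rewrite sqrtr_ge0.
have rho2 : rho ^+ 2 = a^+2 + b^+2 by rewrite sqr_sqrtr // addr_ge0 // sqr_ge0.
have [rz|rnz] := eqVneq rho 0.
  have ha : a = 0 by move: rho2; rewrite rz; nra.
  have hb : b = 0 by move: rho2; rewrite rz; nra.
  exists rho, 0; rewrite rz ha hb !mul0r; split => //; split => //; split => //.
  apply/andP; split => //; rewrite mulr2n; have := pi_gt0 R; lra.
have rp : 0 < rho by rewrite lt_neqAle eq_sym rnz.
set c := a / rho.
have hc2 : c ^+ 2 <= 1.
  rewrite /c expr_div_n ler_pdivrMr ?exprn_gt0 // mul1r rho2; nra.
have hc : -1 <= c <= 1 by apply/andP; split; nra.
have hcin : c \in `[(-1), 1] by rewrite in_itv /=.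
have e1 : 1 - c^+2 = (b / rho)^+2.
  rewrite /c !expr_div_n rho2; field; by rewrite -rho2 expf_neq0.
have ha : a = rho * c by rewrite /c mulrC divfK.
have [bp|bn] := lerP 0 b.
  exists rho, (acos c); split => //; split => //; split.
    apply/andP; split; first exact: acos_ge0.
    have := acos_lepi hc; have := pi_gt0 R; rewrite mulr2n; lra.
  split; first by rewrite acosK.
  rewrite sin_acos // e1 sqrtr_sqr ger0_norm ?divr_ge0 // ?ltW //.
  by rewrite mulrC divfK.
exists rho, (pi *+ 2 - acos c); split => //; split => //; split.
  apply/andP; split; have := acos_ge0 hc; have := acos_lepi hc; have := pi_gt0 R; rewrite mulr2n; lra.
rewrite cosB sinB cos2pi sin2pi mul1r mul0r addr0 acosK //; split => //. rewrite mul0r mul1r sub0r.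
rewrite sin_acos // e1 sqrtr_sqr ltr0_norm ?pmulr_llt0 ?invr_gt0 //.
by rewrite opprK mulrC divfK.
Qed.

Lemma sector n : (0 < n)%N -> forall th, 0 <= th <= n%:R * (2 * be) ->
  exists j, (j < n)%N /\ j%:R * (2 * be) <= th <= j.+1%:R * (2 * be).
Proof.
have b0 := be_gt0.
elim: n => [//|n IH] _ th /andP[h0 h1].
have [n0|npos] := eqVneq n 0%N.
  by exists 0%N; split => //; rewrite mul0r h0 /=; move: h1; rewrite n0.
have [hle|hlt] := lerP th (n%:R * (2 * be)).
  have [j [jn hj]] := IH (neq0_lt0n (negbTE npos)) th (introT andP (conj h0 hle)).
  by exists j; split => //; apply: ltn_trans jn _.
exists n; split => //; rewrite h1 andbT ltW //.
Qed.


Lemma sinbe_gt0 : 0 < sin be.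
Proof. apply: sin_gt0_pi; have := be_gt0; have := be_le; lra. Qed.
Lemma cosbe_gt0 : 0 < cos be.
Proof. apply: cos_gt0_pihalf; have := be_gt0; have := be_le; have := pi_gt0 R; lra. Qed.

Lemma rM_cos : r_M R M = cos be.
Proof.
rewrite /r_M (_ : 2 * pi / M%:R = be + be); last by rewrite /be; ring.
rewrite cosD -!expr2 sin2cos2.
rewrite (_ : 2^-1 + 2^-1 * (cos be ^+ 2 - (1 - cos be ^+ 2)) = cos be ^+ 2); last by field.
by rewrite sqrtr_sqr ger0_norm // ltW // cosbe_gt0.
Qed.

Lemma idK (x y : R) : x = y -> x = y. Proof. by []. Qed.
Lemma rcC (x : R) : Complex x 0 = x%:C. Proof. by []. Qed.
Lemma rcD (x y : R) : (x + y)%:C = x%:C + y%:C :> C.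
Proof. by rewrite -!rcC addC addr0. Qed.
Lemma rcM (x y z : R) : x%:C * Complex y z = Complex (x * y) (x * z).
Proof. by rewrite -rcC mulC !mul0r subr0 addr0. Qed.

Lemma disk (w : C) : ComplexField.Normc.normc w <= 1 -> D_M M ((r_M R M)%:C * w).
Proof.
case: w => a b /= hn.
have [rho [th [rho0 [rhoE [hth [ha hb]]]]]] := polar a b.
rewrite -rhoE in hn.
have M0 : (0 < M)%N by apply: leq_trans hM.
have hth' : 0 <= th <= M%:R * (2 * be).
  rewrite (_ : M%:R * (2 * be) = pi *+ 2) //.
  rewrite /be -mulr_natr; field; exact: lt0r_neq0 Mgt0.
have [j [jn /andP [hj1 hj2]]] := @sector M M0 th hth'.
set A := j%:R * (2 * be) in hj1 hj2.
set ps := th - A - be.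
have thE : th = A + (be + ps) by rewrite /ps; ring.
have b0 := be_gt0; have b3 := be_le; have sb := sinbe_gt0.
have hps : - be <= ps <= be.
  move: hj2; rewrite -natr1 mulrDl mul1r -/A => hj2; apply/andP; split; rewrite /ps; lra.
clearbody ps.
set s := rho * sin (be - ps) / (2 * sin be).
set t := rho * sin (be + ps) / (2 * sin be).
have s0 : 0 <= s.
  rewrite /s divr_ge0 ?mulr_ge0 //; first (apply: sin_ge0_pi; lra). by rewrite ltW // mulr_gt0.
have t0 : 0 <= t.
  rewrite /t divr_ge0 ?mulr_ge0 //; first (apply: sin_ge0_pi; lra). by rewrite ltW // mulr_gt0.
have st : s + t = rho * cos ps.
  rewrite /s /t sinB sinD; field; exact: lt0r_neq0.
have st1 : s + t <= 1.
  rewrite st; have := cos_le1 ps; have := cos_geN1 ps; nra.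
pose jo := Ordinal jn.
pose j' := Ordinal (ltn_pmod j.+1 M0).
pose c := (1 - s - t) / M%:R.
have c0 : 0 <= c by rewrite /c divr_ge0 ?ler0n //; lra.
exists (fun k => c + (if k == jo then s else 0) + (if k == j' then t else 0)).
split.
  by move=> k; rewrite !addr_ge0 //; case: eqP.
split.
  rewrite !big_split /= -!big_mkcond !big_pred1_eq sumr_const card_ord /c -mulr_natr.
  field; exact: lt0r_neq0 Mgt0.
have rc0 : (0:R)%:C = 0 :> C by [].
have E : forall k, Complex (c + (if k == jo then s else 0) + (if k == j' then t else 0)) 0 * root_unity R M k
   = c%:C * root_unity R M k + (if k == jo then s%:C * root_unity R M jo else 0)
     + (if k == j' then t%:C * root_unity R M j' else 0).
  move=> k; rewrite rcC !rcD !mulrDl; congr (_ + _ + _); by case: eqP => [->|_]; rewrite ?rc0 ?mul0r.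
under eq_bigr do rewrite E.
rewrite !big_split /= -mulr_sumr ru_sum mulr0 add0r -!big_mkcond !big_pred1_eq.
rewrite [root_unity R M (j.+1 %% M)]ru_X expr_mod ?ru_M // -ru_X.
have e1 : root_unity R M j = Complex (cos A) (sin A) by rewrite ru_angle.
have e2 : root_unity R M j.+1 = Complex (cos (A + (be+be))) (sin (A + (be+be))).
  rewrite ru_angle (_ : j.+1%:R * (2 * be) = A + (be + be)) // /A -natr1; ring.
rewrite rM_cos e1 e2 !rcM ha hb thE addC.
rewrite /s /t (_ : be - ps = (be+be) - (be+ps)); last by ring.
move: (be + ps) => u; congr Complex; rewrite !(cosD, sinD, sinB, cosN, sinN); field; exact: lt0r_neq0.
Qed.

End G.
Section H.
Variable R : realType.
Local Notation C := R[i].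
Local Notation normc := (@ComplexField.Normc.normc R).
Variables (N m : nat) (T : ('I_m -> 'I_N -> C) -> C).
Hypothesis hT : multilinear T.

Lemma upd_same (x : 'I_m -> 'I_N -> C) i : upd x i (x i) = x.
Proof. by apply: funext => j; rewrite /upd; case: eqP => [->|]. Qed.

Lemma T_upd0 x i : T (upd x i (fun _ => 0)) = 0.
Proof.
have h := hT x i 1 (fun _ => 0) (fun _ => 0).
rewrite (_ : (fun k : 'I_N => 1 * 0 + 0) = (fun _ => 0)) in h; last first.
  by apply: funext => k; rewrite mulr0 addr0.
rewrite mul1r in h.
have : T (upd x i (fun _ => 0)) + T (upd x i (fun _ => 0)) - T (upd x i (fun _ => 0))
   = T (upd x i (fun _ => 0)) - T (upd x i (fun _ => 0)) by rewrite -h.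
by rewrite addrK subrr.
Qed.

Lemma T_hom x i a : T (upd x i (fun k => a * x i k)) = a * T x.
Proof.
have h := hT x i a (x i) (fun _ => 0).
rewrite T_upd0 addr0 upd_same in h; rewrite -h; congr T; congr upd.
by apply: funext => k; rewrite addr0.
Qed.

Definition pscale (a : C) n (x : 'I_m -> 'I_N -> C) :=
  fun (i : 'I_m) k => if (i < n)%N then a * x i k else x i k.

Lemma T_pscale a x n : (n <= m)%N -> T (pscale a n x) = a ^+ n * T x.
Proof.
elim: n => [_|n IH hn].
  by rewrite expr0 mul1r.
pose io := Ordinal hn.
have -> : pscale a n.+1 x = upd (pscale a n x) io (fun k => a * pscale a n x io k).
  apply: funext => i; apply: funext => k; rewrite /upd /pscale.
  case: eqP => [->|/eqP hne] /=; first by rewrite ltnn ltnSn.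
  rewrite ltnS leq_eqVlt; case: eqP => // hv.
  by exfalso; move/eqP: hne; apply; apply/val_inj.
by rewrite T_hom IH ?exprS ?mulrA // ltnW.
Qed.

Lemma T_scale a x : T (fun i k => a * x i k) = a ^+ m * T x.
Proof.
rewrite -T_pscale //; congr T; apply: funext => i; apply: funext => k.
by rewrite /pscale ltn_ord.
Qed.
End H.
Section N.
Variable R : realType.
Local Notation C := R[i].
Local Notation normc := (@ComplexField.Normc.normc R).
Lemma normc_real (x : R) : 0 <= x -> normc (x%:C) = x.
Proof. by move=> hx; rewrite /ComplexField.Normc.normc /= expr0n addr0 sqrtr_sqr ger0_norm. Qed.
Lemma normcX (z : C) n : normc (z ^+ n) = normc z ^+ n.
Proof. elim: n => [|n IH]; first by rewrite !expr0 ComplexField.Normc.normc1. by rewrite !exprS ComplexField.Normc.normcM IH. Qed.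
Lemma normc_ge0 (z : C) : 0 <= normc z.
Proof. by case: z => a b; rewrite /ComplexField.Normc.normc /= sqrtr_ge0. Qed.
Lemma normc_ru M j : normc (root_unity R M j) = 1.
Proof. by rewrite /ComplexField.Normc.normc /= cos2Dsin2 sqrtr1. Qed.
Lemma normC_def (z : C) : `|z| = (normc z)%:C. Proof. by []. Qed.
Lemma rsum (I : finType) (F : I -> R) : (\sum_i F i)%:C = \sum_i (F i)%:C :> C.
Proof. by rewrite rmorph_sum. Qed.
Lemma DM_norm M z : D_M M z -> normc z <= 1.
Proof.
case=> lam [l0 [l1 ->]].
have : `|\sum_(j < M) Complex (lam j) 0 * root_unity R M j| <= 1.
  apply: le_trans (ler_norm_sum _ _ _) _.
  rewrite (eq_bigr (fun j => (lam j)%:C)); last first.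
    by move=> j _; rewrite normrM !normC_def normc_ru normc_real // mulr1.
  by rewrite -rsum l1.
by rewrite normC_def -(lecR _ 1).
Qed.
Lemma normc_le_sup N (x : 'I_N -> C) k : normc (x k) <= supnorm x.
Proof. exact: le_bigmax. Qed.
Lemma supnorm_le N (x : 'I_N -> C) : (forall k, normc (x k) <= 1) -> supnorm x <= 1.
Proof. by move=> h; apply: bigmax_le. Qed.
End N.

Lemma sup_compare (R : realType) (SA SB : set R) (c : R) : 0 < c ->
  (forall b, SB b -> SA b) -> (exists b, SB b) -> (forall a, SA a -> SB (c * a)) ->
  sup SB <= sup SA /\ sup SA <= c^-1 * sup SB.
Proof.
move=> cpos hBA [b0 Bb0] hc.
have key : forall a u, c * a <= u -> a <= c^-1 * u.
  by move=> a u h; rewrite -(ler_pM2l cpos) mulrA mulfV ?mul1r // gt_eqF.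
case: (pselect (has_ubound SA)) => [ubA|nubA].
  have ubB : has_ubound SB by case: ubA => u hu; exists u => b /hBA; apply: hu.
  split.
    apply: ge_sup; first by exists b0.
    by move=> b Bb; apply: (ub_le_sup ubA); apply: hBA.
  apply: ge_sup; first by exists b0; apply: hBA.
  by move=> a Aa; apply: key; apply: (ub_le_sup ubB); apply: hc.
have nubB : ~ has_ubound SB.
  move=> [u hu]; apply: nubA; exists (c^-1 * u) => a Aa; apply: key; exact: hu _ (hc a Aa).
rewrite !sup_out; last 2 first.
- by move=> [_ h].
- by move=> [_ h].
by rewrite mulr0 lexx.
Qed.

Theorem mainTheorem2 (R : realType) (N M m : nat) (hM : (3 <= M)%N)
  (T : ('I_m -> 'I_N -> R[i]) -> R[i]) (hT : multilinear T) :
  opnorm_M M T <= opnorm T /\ opnorm T <= (r_M R M) ^- m * opnorm_M M T.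
Proof.
have rpos : 0 < r_M R M by rewrite rM_cos //; exact: cosbe_gt0.
apply: sup_compare; first by rewrite exprn_gt0.
- move=> _ [x Qx <-]; exists x => // i; apply: supnorm_le => k; exact: DM_norm (Qx i k).
- exists (ComplexField.Normc.normc (T (fun _ _ => 0))); exists (fun _ _ => 0) => // i k.
  have := @disk R M hM 0; rewrite mulr0; apply.
  by rewrite ComplexField.Normc.normc0 ler01.
- move=> _ [x Px <-]; exists (fun i k => (r_M R M)%:C * x i k).
    move=> i k; apply: disk => //; have h1 := @normc_le_sup R N (x i) k; have h2 := Px i; exact: le_trans h1 h2.
  by rewrite T_scale // ComplexField.Normc.normcM normcX normc_real // ltW.
Qed.
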